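(* Let $\mathrm{cleaf}_3:\mathbb{R}\to\mathbb{R}$ be the leaf function of basis $3$. For every real $l$, writing $c=\mathrm{cleaf}_3(l)$, $$\Bigl(\mathrm{cleaf}_3\Bigl(\frac l2\Bigr)\Bigr)^2=\frac{c^2-1}{4c^2+2}+\frac{\sqrt3\sqrt{1+c^2+c^4}}{2\sqrt{1+4c^2+4c^4}}+\frac{\sqrt3\,c\sqrt{-3-6c^2+2\sqrt3\,(1+2c^2)\sqrt{1+c^2+c^4}}}{2(1+2c^2)^{3/2}}.$$
   Context: For a natural number $n$, the leaf function $\mathrm{cleaf}_n:\mathbb{R}\to\mathbb{R}$ is the solution of $\frac{\mathrm{d}^2r}{\mathrm{d}l^2}=-n\,r^{2n-1}$ with $r(0)=1$, $r'(0)=0$. *)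

(* Defs.v *)
From Stdlib Require Import Reals.
From Coquelicot Require Import Coquelicot.
Open Scope R_scope.

(* f is the leaf function cleaf_n : R -> R, i.e. a (global, twice
   differentiable) solution of  r'' = - n r^(2n-1),  r(0) = 1, r'(0) = 0.
   Such a solution is unique, so quantifying over all f with [is_cleaf n f]
   is the same as speaking about "the" leaf function. *)
Definition is_cleaf (n : nat) (f : R -> R) : Prop :=
  exists df : R -> R,
    (forall x, is_derive f x (df x)) /\
    (forall x, is_derive df x (- INR n * f x ^ (2 * n - 1))) /\
    f 0 = 1 /\ df 0 = 0.

(* Main.v *)
Require Import Defs.
From Stdlib Require Import Reals Lra Psatz.
From Coquelicot Require Import Coquelicot.
Open Scope R_scope.

Lemma deq (f : R -> R) x l l' : is_derive f x l -> l = l' -> is_derive f x l'.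
Proof. intros H ->; exact H. Qed.

Lemma deriv_cont (f df : R -> R) x : (forall x, is_derive f x (df x)) -> continuity_pt f x.
Proof.
intros H. apply continuity_pt_filterlim.
apply (ex_derive_continuous (K:=R_AbsRing) (V:=R_NormedModule)). exists (df x). apply H.
Qed.

Lemma mono_dec (h dh : R -> R) a b : (forall x, is_derive h x (dh x)) ->
  (forall x, dh x <= 0) -> a <= b -> h b <= h a.
Proof.
intros Hd Hn Hab.
destruct (MVT_gen h a b dh) as [c [_ Hc]].
- intros; apply Hd.
- intros; apply (deriv_cont h dh), Hd.
- specialize (Hn c). nra.
Qed.

Lemma mono_inc (h dh : R -> R) a b : (forall x, is_derive h x (dh x)) ->
  (forall x, 0 <= dh x) -> a <= b -> h a <= h b.
Proof.
intros Hd Hn Hab.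
destruct (MVT_gen h a b dh) as [c [_ Hc]].
- intros; apply Hd.
- intros; apply (deriv_cont h dh), Hd.
- specialize (Hn c). nra.
Qed.

Lemma gronwall (E dE : R -> R) (K : R) : (forall x, is_derive E x (dE x)) ->
  (forall x, 0 <= E x) -> (forall x, - (K * E x) <= dE x <= K * E x) -> E 0 = 0 ->
  forall x, E x = 0.
Proof.
intros Hd Hp Hb H0 x.
destruct (Rle_or_lt 0 x) as [Hx|Hx].
- assert (H := mono_dec (fun t => E t * exp (- K * t)) (fun t => (dE t - K * E t) * exp (- K * t)) 0 x).
  simpl in H. rewrite H0 in H.
  assert (E x * exp (- K * x) <= 0).
  { eapply Rle_trans. apply H; auto.
    - intros t. eapply deq.
      apply (is_derive_mult E (fun t0 => exp (- K * t0))). apply Hd. auto_derive; auto. intros; apply Rmult_comm.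
      simpl. unfold plus, mult; simpl. unfold mult; simpl. ring.
    - intros t. specialize (Hb t). assert (0 < exp (- K * t)) by apply exp_pos. nra.
    - lra. }
  specialize (Hp x). assert (0 < exp (- K * x)) by apply exp_pos. nra.
- assert (H := mono_inc (fun t => E t * exp (K * t)) (fun t => (dE t + K * E t) * exp (K * t)) x 0).
  simpl in H. rewrite H0 in H.
  assert (E x * exp (K * x) <= 0).
  { replace 0 with (0 * exp (K * 0)) by ring. apply H; auto.
    - intros t. eapply deq.
      apply (is_derive_mult E (fun t0 => exp (K * t0))). apply Hd. auto_derive; auto. intros; apply Rmult_comm.
      simpl. unfold plus, mult; simpl. unfold mult; simpl. ring.
    - intros t. specialize (Hb t). assert (0 < exp (K * t)) by apply exp_pos. nra.
    - lra. }
  specialize (Hp x). assert (0 < exp (K * x)) by apply exp_pos. nra.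
Qed.

Section S.
Variables f df : R -> R.
Hypothesis Hf : forall x, is_derive f x (df x).
Hypothesis Hdf : forall x, is_derive df x (-3 * f x ^ 5).
Hypothesis H0 : f 0 = 1.
Hypothesis Hd0 : df 0 = 0.

Ltac exd := repeat match goal with
  | |- _ /\ _ => split
  | |- True => exact I
  | |- ex_derive (fun x => f x) ?t => exists (df t); apply Hf
  | |- ex_derive (fun x => df x) ?t => exists (-3 * f t ^ 5); apply Hdf
  end.
Ltac dsub := repeat (first [rewrite (is_derive_unique f _ _ (Hf _)) | rewrite (is_derive_unique df _ _ (Hdf _))]).

Lemma energy x : df x ^ 2 + f x ^ 6 = 1.
Proof.
assert (H := gronwall (fun x => (df x ^ 2 + f x ^ 6 - 1)^2) (fun _ => 0) 0).
assert (forall x, (df x ^ 2 + f x ^ 6 - 1)^2 = 0).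
{ apply H.
  - intros t. auto_derive. exd. dsub. ring.
  - intros; cbv beta; apply pow2_ge_0.
  - intros; cbv beta; lra.
  - rewrite H0, Hd0. ring. }
specialize (H1 x). nra.
Qed.
End S.

Definition Pp z := 2*z^4 + 2*z^2 - 1.
Definition Dp z := 1 + 8*z^2 + 8*z^6 - 8*z^8.
Definition dP z := 8*z^3 + 4*z.
Definition dD z := 16*z + 48*z^5 - 64*z^7.
Definition ddD z := 16 + 240*z^4 - 448*z^6.
Definition Tf z := / sqrt (Dp z).
Definition Af z := dP z - Pp z * dD z / (2 * Dp z).
Definition dA z := 24*z^2 + 4 - ((dP z * dD z + Pp z * ddD z) * (2 * Dp z) - Pp z * dD z * (2 * dD z)) / (2 * Dp z)^2.
Definition Phi z := Pp z * Tf z.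
Definition Phi1 z := Af z * Tf z.
Definition Phi2 z := dA z * Tf z + Af z * (- dD z * Tf z / (2 * Dp z)).

Lemma Dp_pos z : -1 <= z <= 1 -> 1 <= Dp z.
Proof.
intros Hz. unfold Dp. assert (0 <= z^2 <= 1) by nra.
set (y := z^2) in *. replace (z^6) with (y^3) by (unfold y; ring).
replace (z^8) with (y^4) by (unfold y; ring).
assert (0 <= y^3*(1-y)) by (apply Rmult_le_pos; [apply pow_le|]; lra).
replace (y^4) with (y^3*y) by ring. nra.
Qed.

Lemma invsqrt_der u : 0 < u -> is_derive (fun u => / sqrt u) u (- / (2 * u) * / sqrt u).
Proof.
intros Hu. assert (0 < sqrt u) by (apply sqrt_lt_R0; exact Hu).
auto_derive.
- repeat split; lra.
- rewrite sqrt_sqrt by lra. field. lra.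
Qed.

Lemma Dp_der z : is_derive Dp z (dD z).
Proof. unfold Dp, dD. auto_derive; auto. ring. Qed.

Lemma T_der z : 0 < Dp z -> is_derive Tf z (- dD z * Tf z / (2 * Dp z)).
Proof.
intros Hz. assert (0 < sqrt (Dp z)) by (apply sqrt_lt_R0; exact Hz). eapply deq.
- apply (is_derive_comp (fun u => / sqrt u) Dp). apply invsqrt_der; auto. apply Dp_der.
- unfold scal; simpl; unfold mult; simpl. unfold Tf. field. split; lra.
Qed.

Lemma Phi_der z : 0 < Dp z -> is_derive Phi z (Phi1 z).
Proof.
intros Hz. eapply deq.
- apply (is_derive_mult Pp Tf). unfold Pp; auto_derive; auto. apply T_der; auto. intros; apply Rmult_comm.
- unfold plus, mult; simpl. unfold mult; simpl. unfold Phi1, Af, dP. field. lra.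
Qed.

Ltac nzD z := repeat split; match goal with |- ?a <> 0 =>
  first [ let H := fresh in assert (H: a = Dp z) by (unfold Dp; ring); rewrite H; lra
        | let H := fresh in assert (H: a = 2 * Dp z) by (unfold Dp; ring); rewrite H; lra ] end.

Lemma A_der z : 0 < Dp z -> is_derive Af z (dA z).
Proof.
intros Hz. unfold Af, dA, dP, dD, ddD, Pp. unfold Dp at 1 2 3. auto_derive.
- nzD z.
- field. nzD z.
Qed.

Lemma Phi1_der z : 0 < Dp z -> is_derive Phi1 z (Phi2 z).
Proof.
intros Hz. eapply deq.
- apply (is_derive_mult Af Tf). apply A_der; auto. apply T_der; auto. intros; apply Rmult_comm.
- unfold plus, mult; simpl. unfold mult; simpl. unfold Phi2. ring.
Qed.

Lemma Tsq z : 0 < Dp z -> Tf z ^ 2 = / Dp z.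
Proof.
intros Hz. unfold Tf. rewrite pow_inv. rewrite pow2_sqrt; lra.
Qed.

Lemma key z : 0 < Dp z -> -3 * z^5 * Phi1 z + (1 - z^6) * Phi2 z = -12 * Phi z ^ 5.
Proof.
intros Hz. assert (Ht := Tsq z Hz). 
replace (Phi z ^ 5) with (Pp z ^ 5 * Tf z * (Tf z ^ 2)^2) by (unfold Phi; ring).
rewrite Ht. unfold Phi1, Phi2, Af, dA, Pp, dP, dD, ddD.
set (t := Tf z). unfold Dp in *. field. lra.
Qed.

Lemma prod_bd a b : -1 <= a <= 1 -> -1 <= b <= 1 -> -1 <= a * b <= 1.
Proof. intros. split; nra. Qed.

Lemma uniq (u du v dv : R -> R) :
  (forall t, is_derive u t (du t)) -> (forall t, is_derive du t (-12 * u t ^ 5)) ->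
  (forall t, is_derive v t (dv t)) -> (forall t, is_derive dv t (-12 * v t ^ 5)) ->
  (forall t, -1 <= u t <= 1) -> (forall t, -1 <= v t <= 1) ->
  u 0 = v 0 -> du 0 = dv 0 -> forall t, u t = v t.
Proof.
intros Hu Hdu Hv Hdv Bu Bv H0 H1.
assert (H := gronwall (fun t => (u t - v t)^2 + (du t - dv t)^2)
  (fun t => 2 * (u t - v t) * (du t - dv t) * (1 - 12 * (u t ^ 4 + u t ^ 3 * v t + u t ^ 2 * v t ^ 2 + u t * v t ^ 3 + v t ^ 4))) 61).
assert (forall t, (u t - v t)^2 + (du t - dv t)^2 = 0).
{ apply H.
  - intros t. auto_derive.
    + repeat match goal with
      | |- _ /\ _ => split
      | |- True => exact I
      | |- ex_derive (fun x => u x) ?t => exists (du t); apply Hu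
      | |- ex_derive (fun x => du x) ?t => exists (-12 * u t ^ 5); apply Hdu
      | |- ex_derive (fun x => v x) ?t => exists (dv t); apply Hv
      | |- ex_derive (fun x => dv x) ?t => exists (-12 * v t ^ 5); apply Hdv
      end.
    + repeat (first [rewrite (is_derive_unique u _ _ (Hu _)) | rewrite (is_derive_unique du _ _ (Hdu _))
        | rewrite (is_derive_unique v _ _ (Hv _)) | rewrite (is_derive_unique dv _ _ (Hdv _))]). ring.
  - intros; cbv beta. apply Rplus_le_le_0_compat; apply pow2_ge_0.
  - intros t; cbv beta.
    set (a := u t - v t). set (b := du t - dv t).
    set (S := u t ^ 4 + u t ^ 3 * v t + u t ^ 2 * v t ^ 2 + u t * v t ^ 3 + v t ^ 4).
    assert (-5 <= S <= 5).
    { specialize (Bu t); specialize (Bv t). unfold S.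
      assert (h1 := prod_bd _ _ Bu Bu). assert (h2 := prod_bd _ _ Bv Bv).
      assert (h3 := prod_bd _ _ Bu Bv).
      assert (h4 := prod_bd _ _ h1 h1). assert (h5 := prod_bd _ _ h2 h2).
      assert (h6 := prod_bd _ _ h1 h3). assert (h7 := prod_bd _ _ h1 h2).
      assert (h8 := prod_bd _ _ h3 h2).
      replace (u t ^ 4) with (u t * u t * (u t * u t)) by ring.
      replace (v t ^ 4) with (v t * v t * (v t * v t)) by ring.
      replace (u t ^ 3 * v t) with (u t * u t * (u t * v t)) by ring.
      replace (u t ^ 2 * v t ^ 2) with (u t * u t * (v t * v t)) by ring.
      replace (u t * v t ^ 3) with (u t * v t * (v t * v t)) by ring.
      lra. }
    set (k := 1 - 12 * S).
    assert (0 <= (61 + k) * (a - b)^2) by (apply Rmult_le_pos; [unfold k; lra| apply pow2_ge_0]).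
    assert (0 <= (61 - k) * (a - b)^2) by (apply Rmult_le_pos; [unfold k; lra| apply pow2_ge_0]).
    assert (0 <= (61 + k) * (a + b)^2) by (apply Rmult_le_pos; [unfold k; lra| apply pow2_ge_0]).
    assert (0 <= (61 - k) * (a + b)^2) by (apply Rmult_le_pos; [unfold k; lra| apply pow2_ge_0]).
    assert (E1 : (61 + k) * (a - b)^2 + (61 - k) * (a + b)^2 = 2 * (61 * (a^2 + b^2) - 2 * a * b * k)) by ring.
    assert (E2 : (61 - k) * (a - b)^2 + (61 + k) * (a + b)^2 = 2 * (61 * (a^2 + b^2) + 2 * a * b * k)) by ring.
    split; lra.
  - rewrite H0, H1. ring. }
intros t. specialize (H2 t).
assert (0 <= (u t - v t)^2) by apply pow2_ge_0. assert (0 <= (du t - dv t)^2) by apply pow2_ge_0.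
assert (Hz : (u t - v t)^2 = 0) by lra. assert (u t - v t = 0) by nra. lra.
Qed.

Definition Qz z := 1 + 2*z^2 + 6*z^4 - 4*z^6 + 4*z^8.
Definition Mz z := 4*z^4 - 2*z^2 + 1.

Lemma alg z : -1 <= z <= 1 ->
  let c := Pp z / sqrt (Dp z) in
  z ^ 2 = (c ^ 2 - 1) / (4 * c ^ 2 + 2)
      + sqrt 3 * sqrt (1 + c ^ 2 + c ^ 4) / (2 * sqrt (1 + 4 * c ^ 2 + 4 * c ^ 4))
      + sqrt 3 * c
          * sqrt (-3 - 6 * c ^ 2 + 2 * sqrt 3 * (1 + 2 * c ^ 2) * sqrt (1 + c ^ 2 + c ^ 4))
          / (2 * Rpower (1 + 2 * c ^ 2) (3 / 2)).
Proof.
intros Hz c.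
assert (HD := Dp_pos z Hz).
assert (Hy : 0 <= z^2 <= 1) by nra.
assert (HsD : sqrt (Dp z) * sqrt (Dp z) = Dp z) by (apply sqrt_sqrt; lra).
assert (HsDp : 0 < sqrt (Dp z)) by (apply sqrt_lt_R0; lra).
assert (H3 : sqrt 3 * sqrt 3 = 3) by (apply sqrt_sqrt; lra).
assert (H3p : 0 < sqrt 3) by (apply sqrt_lt_R0; lra).
assert (HQ : 0 < Qz z).
{ unfold Qz. set (y := z^2) in *. replace (z^4) with (y^2) by (unfold y; ring).
  replace (z^6) with (y^3) by (unfold y; ring). replace (z^8) with (y^4) by (unfold y; ring).
  assert (0 <= y^2 * (1 - y)) by (apply Rmult_le_pos; [apply pow_le|]; lra). nra. }
assert (HM : 0 < Mz z).
{ unfold Mz. set (y := z^2) in *. replace (z^4) with (y^2) by (unfold y; ring). nra. }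
assert (Hc2 : c ^ 2 = Pp z ^ 2 / Dp z).
{ unfold c, Rdiv. rewrite Rpow_mult_distr, pow_inv, pow2_sqrt by lra. reflexivity. }
assert (Hc4 : c ^ 4 = (c ^ 2) ^ 2) by ring.
assert (Hw0 : 0 <= c ^ 2) by apply pow2_ge_0.
set (w := 1 + 2 * c ^ 2).
assert (Hw : 1 <= w) by (unfold w; lra).
assert (Hsw : sqrt w * sqrt w = w) by (apply sqrt_sqrt; lra).
assert (Hswp : 0 < sqrt w) by (apply sqrt_lt_R0; lra).
assert (S1 : sqrt (1 + c ^ 2 + c ^ 4) = sqrt 3 * Qz z / Dp z).
{ rewrite <- (sqrt_pow2 (sqrt 3 * Qz z / Dp z)).
  2: { apply Rmult_le_pos; [apply Rmult_le_pos; lra | left; apply Rinv_0_lt_compat; lra]. }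
  f_equal. rewrite Hc4, Hc2.
  replace ((sqrt 3 * Qz z / Dp z) ^ 2) with ((sqrt 3 * sqrt 3) * Qz z ^ 2 / Dp z ^ 2) by (field; lra).
  rewrite H3. unfold Qz, Pp, Dp in *. field. lra. }
assert (S2 : sqrt (1 + 4 * c ^ 2 + 4 * c ^ 4) = w).
{ rewrite <- (sqrt_pow2 w) by lra. f_equal. unfold w. ring. }
assert (S3 : Rpower w (3 / 2) = w * sqrt w).
{ replace (3 / 2) with (1 + / 2) by field. rewrite Rpower_plus, Rpower_1, Rpower_sqrt; lra. }
assert (S4 : sqrt (-3 - 6 * c ^ 2 + 2 * sqrt 3 * w * sqrt (1 + c ^ 2 + c ^ 4))
             = sqrt 3 * sqrt w * Mz z / sqrt (Dp z)).
{ rewrite <- (sqrt_pow2 (sqrt 3 * sqrt w * Mz z / sqrt (Dp z))).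
  2: { apply Rmult_le_pos; [apply Rmult_le_pos; [apply Rmult_le_pos|]; lra | left; apply Rinv_0_lt_compat; lra]. }
  f_equal. rewrite S1.
  replace ((sqrt 3 * sqrt w * Mz z / sqrt (Dp z)) ^ 2) with
    ((sqrt 3 * sqrt 3) * (sqrt w * sqrt w) * Mz z ^ 2 / (sqrt (Dp z) * sqrt (Dp z))) by (field; lra).
  replace (2 * sqrt 3 * w * (sqrt 3 * Qz z / Dp z)) with (2 * (sqrt 3 * sqrt 3) * w * Qz z / Dp z) by (field; lra).
  rewrite H3, Hsw, HsD. unfold w. rewrite Hc2. unfold Qz, Mz, Pp, Dp in *. field. lra. }
rewrite S4, S1, S2, S3.
replace (sqrt 3 * c * (sqrt 3 * sqrt w * Mz z / sqrt (Dp z)) / (2 * (w * sqrt w)))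
  with ((sqrt 3 * sqrt 3) * Pp z * Mz z / (2 * (sqrt (Dp z) * sqrt (Dp z)) * w)) by (unfold c; field; lra).
replace (sqrt 3 * (sqrt 3 * Qz z / Dp z) / (2 * w)) with ((sqrt 3 * sqrt 3) * Qz z / (2 * Dp z * w)) by (field; lra).
rewrite H3, HsD. unfold w. rewrite Hc2. unfold Qz, Mz, Pp, Dp in *. field.
assert (0 <= (2 * z ^ 4 + 2 * z ^ 2 - 1) ^ 2) by apply pow2_ge_0. repeat split; lra.
Qed.

Lemma Phi_bd z : -1 <= z <= 1 -> -1 <= Phi z <= 1.
Proof.
intros Hz. assert (HD := Dp_pos z Hz).
assert (H2 : Phi z ^ 2 <= 1).
{ unfold Phi. rewrite Rpow_mult_distr, Tsq by lra.
  assert (0 <= z^2 <= 1) by nra.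
  assert (E : 1 - Pp z ^ 2 * / Dp z = 12 * z^2 * (1 - z^2) * (1 + z^2 + z^4) / Dp z).
  { unfold Pp, Dp in *. field. lra. }
  assert (0 <= 12 * z^2 * (1 - z^2) * (1 + z^2 + z^4) / Dp z).
  { apply Rmult_le_pos. apply Rmult_le_pos. apply Rmult_le_pos. lra. lra.
    assert (0 <= z^4) by (replace (z^4) with ((z^2)^2) by ring; apply pow2_ge_0). lra.
    left; apply Rinv_0_lt_compat; lra. }
  lra. }
split; nra.
Qed.

Section M.
Variables f df : R -> R.
Hypothesis Hf : forall x, is_derive f x (df x).
Hypothesis Hdf : forall x, is_derive df x (-3 * f x ^ 5).
Hypothesis H0 : f 0 = 1.
Hypothesis Hd0 : df 0 = 0.

Lemma fb t : -1 <= f t <= 1.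
Proof.
assert (He := energy f df Hf Hdf H0 Hd0 t).
assert (0 <= df t ^ 2) by apply pow2_ge_0.
assert (0 <= f t ^ 2) by apply pow2_ge_0.
set (y := f t ^ 2) in *.
assert (y ^ 3 <= 1) by (unfold y; replace ((f t ^ 2) ^ 3) with (f t ^ 6) by ring; lra).
assert (y <= 1).
{ destruct (Rle_or_lt y 1) as [h|h]; auto.
  assert (1 < y * y) by nra. assert (1 < y * y * y) by nra. simpl in *. nra. }
unfold y in *. split; nra.
Qed.

Lemma psi_der t : is_derive (fun t => Phi (f t)) t (df t * Phi1 (f t)).
Proof.
assert (HD := Dp_pos _ (fb t)). eapply deq.
- apply (is_derive_comp Phi f). apply Phi_der; lra. apply Hf.
- unfold scal; simpl; unfold mult; simpl. reflexivity.
Qed.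

Lemma dpsi_der t : is_derive (fun t => df t * Phi1 (f t)) t (-12 * Phi (f t) ^ 5).
Proof.
assert (HD := Dp_pos _ (fb t)). eapply deq.
- apply (is_derive_mult df (fun t => Phi1 (f t))). apply Hdf.
  apply (is_derive_comp Phi1 f). apply Phi1_der; lra. apply Hf. intros; apply Rmult_comm.
- rewrite <- key by lra. assert (He := energy f df Hf Hdf H0 Hd0 t).
  replace (1 - f t ^ 6) with (df t ^ 2) by lra.
  unfold plus, mult, scal; simpl. unfold mult; simpl. ring.
Qed.

Lemma double t : f (2 * t) = Phi (f t).
Proof.
apply (uniq (fun t => f (2 * t)) (fun t => 2 * df (2 * t)) (fun t => Phi (f t)) (fun t => df t * Phi1 (f t))).
- intros x. eapply deq. apply (is_derive_comp f (fun t => 2 * t)). apply Hf.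
  auto_derive; auto. unfold scal; simpl; unfold mult; simpl. ring.
- intros x. eapply deq. apply (is_derive_comp (fun u => 2 * df u) (fun t => 2 * t)).
  eapply deq. apply (is_derive_scal df). apply Hdf. reflexivity.
  auto_derive; auto. unfold scal; simpl; unfold mult; simpl. ring.
- apply psi_der.
- apply dpsi_der.
- intros; apply fb.
- intros; apply Phi_bd, fb.
- cbv beta. rewrite Rmult_0_r, H0. unfold Phi, Tf.
  replace (Dp 1) with (3 ^ 2) by (unfold Dp; ring). rewrite sqrt_pow2 by lra.
  unfold Pp. field.
- cbv beta. rewrite Rmult_0_r, Hd0. ring.
Qed.
End M.

Theorem mainTheorem15 :
  forall (cleaf3 : R -> R), is_cleaf 3 cleaf3 ->
  forall l : R,
    let c := cleaf3 l in
    (cleaf3 (l / 2)) ^ 2 =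
      (c ^ 2 - 1) / (4 * c ^ 2 + 2)
      + sqrt 3 * sqrt (1 + c ^ 2 + c ^ 4) / (2 * sqrt (1 + 4 * c ^ 2 + 4 * c ^ 4))
      + sqrt 3 * c
          * sqrt (-3 - 6 * c ^ 2 + 2 * sqrt 3 * (1 + 2 * c ^ 2) * sqrt (1 + c ^ 2 + c ^ 4))
          / (2 * Rpower (1 + 2 * c ^ 2) (3 / 2)).
Proof.
intros f [df [Hf [Hdf [H0 Hd0]]]] l c.
assert (Hdf' : forall x, is_derive df x (-3 * f x ^ 5)).
{ intros x. eapply deq. apply Hdf. simpl. ring. }
assert (Hc : c = Pp (f (l / 2)) / sqrt (Dp (f (l / 2)))).
{ unfold c. replace l with (2 * (l / 2)) at 1 by field.
  rewrite (double f df Hf Hdf' H0 Hd0). reflexivity. }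
rewrite Hc. apply alg. apply (fb f df Hf Hdf' H0 Hd0).
Qed.
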